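(* Let $\mathbf A$ be a super-paraorthomodular lattice and let $x,y\in\mathrm{Sh}(\mathbf A)$. Then the subalgebra $\mathbf{Sg}(x,y)$ of $\mathbf A$ generated by $x,y$ is distributive if and only if $x$ and $y$ commute in the orthomodular poset $\mathbf{Sh}(\mathbf A)$. In particular (in this case), $\mathbf{Sg}(x,y)$ is a Boolean subalgebra of $\mathbf A$.
   Context: A pseudo-Kleene lattice is an algebra $(A,\land,\lor,{}',0,1)$ that is a bounded lattice with an antitone involution ${}'$ ($x\leq y\Rightarrow y'\leq x'$, $x''=x$) satisfying $x\land x'\leq y\lor y'$. It is super-paraorthomodular if for all $x,y$: (SP1) $x\leq y$ and $x'\land y=(x\land x')\lor(y\land y')$ imply $y\land(x\lor x')=x\lor(y\land y')$; (SP2) $x\leq y$ implies $(x\land x')\lor(y\land y')=(x'\land y)\land(x'\land y)'$. $\mathrm{Sh}(\mathbf A)=\{a\in A:a\land a'=0\}$ and $\mathbf{Sh}(\mathbf A)=(\mathrm{Sh}(\mathbf A),\leq,{}',0,1)$ with inherited order and involution (it is an orthomodular poset). In $\mathbf{Sh}(\mathbf A)$, $x$ and $y$ commute if the meets $x\land y$ and $x\land y'$ exist in $\mathbf{Sh}(\mathbf A)$ and $x=(x\land y)\lor(x\land y')$ there. A Boolean subalgebra is a subalgebra which is a distributive lattice in which $u\land u'=0$ for every element $u$. *)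

(* Defs.v *)
From HB Require Import structures.
From mathcomp Require Import all_boot all_order.
Set Implicit Arguments. Unset Strict Implicit. Unset Printing Implicit Defensive.
Import Order.TTheory.
Local Open Scope order_scope.

(* A bounded lattice L (mathcomp tbLatticeType) together with a unary
   operation c playing the role of ' . *)

Section PK.
Context {disp : Order.disp_t} {L : tbLatticeType disp}.

Definition pseudo_Kleene (c : L -> L) : Prop :=
  [/\ (forall x y : L, x <= y -> c y <= c x),
      (forall x : L, c (c x) = x) &
      (forall x y : L, x `&` c x <= y `|` c y)].

Definition super_paraorthomodular (c : L -> L) : Prop :=
  [/\ pseudo_Kleene c,
      (forall x y : L, x <= y ->
         c x `&` y = (x `&` c x) `|` (y `&` c y) ->
         y `&` (x `|` c x) = x `|` (y `&` c y)) &
      (forall x y : L, x <= y ->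
         (x `&` c x) `|` (y `&` c y) = (c x `&` y) `&` c (c x `&` y))].

Definition Sh (c : L -> L) (a : L) : Prop := a `&` c a = \bot.

Definition subalgebra (c : L -> L) (S : L -> Prop) : Prop :=
  [/\ S \bot, S \top,
      (forall a b, S a -> S b -> S (a `&` b)),
      (forall a b, S a -> S b -> S (a `|` b)) &
      (forall a, S a -> S (c a))].

Definition Sg (c : L -> L) (x y : L) : L -> Prop :=
  fun z => forall S, subalgebra c S -> S x -> S y -> S z.

Definition distributive_sub (S : L -> Prop) : Prop :=
  (forall a b e, S a -> S b -> S e -> a `&` (b `|` e) = (a `&` b) `|` (a `&` e)) /\
  (forall a b e, S a -> S b -> S e -> a `|` (b `&` e) = (a `|` b) `&` (a `|` e)).

Definition Boolean_sub (c : L -> L) (S : L -> Prop) : Prop :=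
  distributive_sub S /\ (forall u, S u -> u `&` c u = \bot).

Definition is_glb_in (P : L -> Prop) (a b m : L) : Prop :=
  [/\ P m, m <= a, m <= b & forall z, P z -> z <= a -> z <= b -> z <= m].
Definition is_lub_in (P : L -> Prop) (a b m : L) : Prop :=
  [/\ P m, a <= m, b <= m & forall z, P z -> a <= z -> b <= z -> m <= z].

(* x and y commute in the orthomodular poset Sh(A): the meets x /\ y and
   x /\ y' exist in Sh(A) and x is the join (in Sh(A)) of them. *)
Definition commute_Sh (c : L -> L) (x y : L) : Prop :=
  exists m1 m2 : L,
    [/\ is_glb_in (Sh c) x y m1, is_glb_in (Sh c) x (c y) m2 &
        is_lub_in (Sh c) m1 m2 x].

End PK.

(* Main.v *)
Require Import Defs.
From HB Require Import structures.
From mathcomp Require Import all_boot all_order.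
Import Order.TTheory.
Local Open Scope order_scope.

Lemma pk_anti {disp} {L : tbLatticeType disp} {c : L -> L} :
  pseudo_Kleene c -> forall a b : L, a <= b -> c b <= c a.
Proof. by case. Qed.

Lemma pk_inv {disp} {L : tbLatticeType disp} {c : L -> L} :
  pseudo_Kleene c -> forall a : L, c (c a) = a.
Proof. by case. Qed.

Lemma pk_flip {disp} {L : tbLatticeType disp} {c : L -> L} :
  pseudo_Kleene c -> forall a b : L, a <= c b -> b <= c a.
Proof. move=> hc a b h; rewrite -[b](pk_inv hc); exact: pk_anti. Qed.

Lemma pk_join {disp} {L : tbLatticeType disp} {c : L -> L} :
  pseudo_Kleene c -> forall a b : L, c (a `|` b) = c a `&` c b.
Proof.
move=> hc a b; apply: le_anti; rewrite lexI !(pk_anti hc) ?leUl ?leUr //=.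
apply: pk_flip => //; rewrite leUx; apply/andP; split; apply: pk_flip => //.
  exact: leIl.
exact: leIr.
Qed.

Lemma pk_meet {disp} {L : tbLatticeType disp} {c : L -> L} :
  pseudo_Kleene c -> forall a b : L, c (a `&` b) = c a `|` c b.
Proof.
move=> hc a b; by rewrite -{1}[a](pk_inv hc) -{1}[b](pk_inv hc) -pk_join // pk_inv.
Qed.

Lemma pk_top {disp} {L : tbLatticeType disp} {c : L -> L} :
  pseudo_Kleene c -> c \top = \bot.
Proof.
move=> hc; apply/eqP; rewrite -lex0 -[X in _ <= X](pk_inv hc).
exact/pk_anti/lex1.
Qed.

Lemma pk_bot {disp} {L : tbLatticeType disp} {c : L -> L} :
  pseudo_Kleene c -> c \bot = \top.
Proof. by move=> hc; rewrite -(pk_top hc) pk_inv. Qed.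

Lemma sh_c {disp} {L : tbLatticeType disp} {c : L -> L} :
  pseudo_Kleene c -> forall a : L, Sh c a -> Sh c (c a).
Proof. by move=> hc a; rewrite /Sh pk_inv // meetC. Qed.

Lemma sh_join_c {disp} {L : tbLatticeType disp} {c : L -> L} :
  pseudo_Kleene c -> forall a : L, Sh c a -> a `|` c a = \top.
Proof. by move=> hc a h; rewrite -[a `|` _](pk_inv hc) pk_join // pk_inv // meetC h pk_bot. Qed.

Lemma po {disp} {L : tbLatticeType disp} {c : L -> L} :
  super_paraorthomodular c -> forall a b : L, a <= b -> c a `&` b = \bot -> a = b.
Proof.
case=> hc sp1 sp2 a b ab h.
have e := sp2 a b ab; rewrite h meet0x in e.
have := sp1 a b ab; rewrite h e => /(_ erefl).
move/eqP: e; rewrite join_eq0 => /andP[/eqP ha /eqP hb].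
by rewrite hb joinx0 (sh_join_c hc a ha) meetx1 => ->.
Qed.

Lemma sh_rel {disp} {L : tbLatticeType disp} {c : L -> L} {a b : L} :
  super_paraorthomodular c -> a <= b -> Sh c a -> Sh c b ->
  Sh c (c a `&` b).
Proof. by case=> hc _ sp2 ab ha hb; rewrite /Sh -sp2 // ha hb joinx0. Qed.

Lemma sh_orth_join {disp} {L : tbLatticeType disp} {c : L -> L} {a b : L} :
  super_paraorthomodular c -> a <= c b -> Sh c a -> Sh c b ->
  Sh c (a `|` b).
Proof.
move=> H ab ha hb; have hc : pseudo_Kleene c by case: H.
have := sh_rel H ab ha (sh_c hc b hb); move/(sh_c hc).
by rewrite pk_meet // !pk_inv.
Qed.

Lemma oml_piece {disp} {L : tbLatticeType disp} {c : L -> L} {A B : L} :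
  super_paraorthomodular c -> A <= c B -> Sh c A -> Sh c B ->
  (A `|` B) `&` c B = A.
Proof.
move=> H AB hA hB; have hc : pseudo_Kleene c by case: H.
symmetry; apply: (po H); first by rewrite lexI leUl.
by rewrite meetCA -(pk_join hc) (sh_orth_join H).
Qed.

Lemma oml2 {disp} {L : tbLatticeType disp} {c : L -> L} {a b : L} :
  super_paraorthomodular c -> a <= b -> Sh c a -> Sh c b ->
  b = a `|` (b `&` c a).
Proof.
move=> H ab ha hb; have hc : pseudo_Kleene c by case: H.
symmetry; apply: (po H); first by rewrite leUx ab leIl.
rewrite (pk_join hc) meetC meetA [b `&` c a]meetC.
exact: (sh_rel H ab ha hb).
Qed.

Definition atoms {disp} {L : tbLatticeType disp} (c : L -> L) {I : finType} (a : I -> L) :=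
  [/\ forall i, Sh c (a i), forall i j, i != j -> a i <= c (a j) &
      \join_(i in [set: I]) a i = \top].

Definition phi {disp} {L : tbLatticeType disp} {I : finType} (a : I -> L) (s : {set I}) : L :=
  \join_(i in s) a i.

Lemma phi_orth {disp} {L : tbLatticeType disp} {c : L -> L} {I : finType} {a : I -> L}
  (s t : {set I}) : pseudo_Kleene c -> atoms c a -> s :&: t = set0 -> phi a s <= c (phi a t).
Proof.
move=> hc [hs ho _] st; apply/joinsP => i iS; apply: (pk_flip hc).
apply/joinsP => j jt; apply: ho; apply/eqP => ji; subst j.
have : i \in s :&: t by rewrite inE iS jt.
by rewrite st inE.
Qed.

Lemma phi_sh {disp} {L : tbLatticeType disp} {c : L -> L} {I : finType} {a : I -> L}
  (s : {set I}) : super_paraorthomodular c -> atoms c a -> Sh c (phi a s).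
Proof.
move=> H [hs ho _]; have hc : pseudo_Kleene c by case: H.
rewrite /phi -big_enum; elim: (enum s) (enum_uniq s) => [|i r IH] /=.
  by rewrite big_nil /Sh meet0x.
case/andP => ir ur; rewrite big_cons; apply: (sh_orth_join H) => //; last exact: IH.
apply: (pk_flip hc); apply/joinsP_seq => j jr _; apply: ho.
by apply: contraNneq ir => <-.
Qed.

Lemma phi_U {disp} {L : tbLatticeType disp} {I : finType} (a : I -> L) (s t : {set I}) :
  phi a (s :|: t) = phi a s `|` phi a t.
Proof. exact: joins_setU. Qed.

Lemma phi_I {disp} {L : tbLatticeType disp} {c : L -> L} {I : finType} {a : I -> L}
  (s t : {set I}) : super_paraorthomodular c -> atoms c a ->
  phi a (s :&: t) = phi a s `&` phi a t.
Proof.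
move=> H ha; have hc : pseudo_Kleene c by case: H.
apply: le_anti; rewrite lexI !le_joins ?subsetIl ?subsetIr //=.
have ht : phi a t = phi a (t :&: s) `|` phi a (t :\: s) by rewrite -phi_U setID.
have o1 : phi a s <= c (phi a (t :\: s)).
  apply: phi_orth => //; apply/setP => i; rewrite !inE.
  by case: (i \in s); rewrite ?andbF.
have o2 : phi a (t :&: s) <= c (phi a (t :\: s)).
  apply: phi_orth => //; apply/setP => i; rewrite !inE.
  by case: (i \in s); rewrite ?andbF.
rewrite ht [s :&: t]setIC.
rewrite -[X in _ <= X](oml_piece H o2 (phi_sh _ H ha) (phi_sh _ H ha)).
by rewrite meetC; apply: leI2.
Qed.

Lemma phi_C {disp} {L : tbLatticeType disp} {c : L -> L} {I : finType} {a : I -> L}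
  (s : {set I}) : super_paraorthomodular c -> atoms c a ->
  c (phi a s) = phi a (~: s).
Proof.
move=> H ha; have hc : pseudo_Kleene c by case: H.
symmetry; apply: (po H).
  by apply: phi_orth => //; rewrite setIC setICr.
case: ha => _ _ htop.
by rewrite -(pk_join hc) -phi_U setUC setUCr /phi htop (pk_top hc).
Qed.

Lemma phi0 {disp} {L : tbLatticeType disp} {I : finType} (a : I -> L) :
  phi a set0 = \bot.
Proof. exact: big_set0. Qed.

Lemma phi1 {disp} {L : tbLatticeType disp} {I : finType} (a : I -> L) i :
  phi a [set i] = a i.
Proof. exact: big_set1. Qed.

Lemma le_bot {disp} {L : tbLatticeType disp} (u v : L) : u <= v -> v = \bot -> u = \bot.
Proof. by move=> uv vb; apply/eqP; rewrite -lex0 -vb. Qed.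

Lemma sg_sub {disp} {L : tbLatticeType disp} {c : L -> L} {x y : L} (S : L -> Prop) :
  subalgebra c S -> S x -> S y -> forall z, Sg c x y z -> S z.
Proof. by move=> hS Sx Sy z h; apply: h. Qed.

Lemma sg_sub_Sg {disp} {L : tbLatticeType disp} {c : L -> L} {x y : L} :
  subalgebra c (Sg c x y) /\ Sg c x y x /\ Sg c x y y.
Proof.
split; last by split=> S _ Sx Sy.
split=> [S [? ? ? ? ?] //|S [? ? ? ? ?] //|a b ha hb S hS Sx Sy|a b ha hb S hS Sx Sy|a ha S hS Sx Sy];
  case: (hS) => ? ? hI hU hC.
- by apply: hI; [apply: ha|apply: hb].
- by apply: hU; [apply: ha|apply: hb].
- by apply: hC; apply: ha.
Qed.

Definition i0 : 'I_4 := @Ordinal 4 0 isT.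
Definition i1 : 'I_4 := @Ordinal 4 1 isT.
Definition i2 : 'I_4 := @Ordinal 4 2 isT.
Definition i3 : 'I_4 := @Ordinal 4 3 isT.

Theorem corollary4p6 (disp : Order.disp_t) (L : tbLatticeType disp)
    (c : L -> L) (x y : L) :
  super_paraorthomodular c -> Sh c x -> Sh c y ->
  (distributive_sub (Sg c x y) <-> commute_Sh c x y) /\
  (commute_Sh c x y -> Boolean_sub c (Sg c x y)).
Proof.
move=> H hx hy; have hc : pseudo_Kleene c by case: H.
have fl := pk_flip hc.
have back : commute_Sh c x y -> Boolean_sub c (Sg c x y).
  case=> m1 [m2] [[S1 m1x m1y g1] [S2 m2x m2cy g2] [_ m1le m2le l]].
  have hm : m1 <= c m2 by apply: le_trans m1y (fl _ _ m2cy).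
  have hxj : x = m1 `|` m2.
    apply: le_anti; apply/andP; split; last by rewrite leUx m1x m2x.
    by apply: l; [exact: (sh_orth_join H hm S1 S2)|exact: leUl|exact: leUr].
  have e2 : x `&` c m1 = m2 by rewrite {1}hxj joinC (oml_piece H (fl _ _ hm) S2 S1).
  have e1 : x `&` c m2 = m1 by rewrite {1}hxj (oml_piece H hm S1 S2).
  have E1 : m1 = x `&` y.
    apply: (po H); first by rewrite lexI m1x m1y.
    rewrite meetA [c m1 `&` x]meetC e2; apply: (@le_bot _ _ _ (y `&` c y) _ hy).
    by rewrite meetC; apply: leI2.
  have E2 : m2 = x `&` c y.
    apply: (po H); first by rewrite lexI m2x m2cy.
    rewrite meetA [c m2 `&` x]meetC e1; apply: (@le_bot _ _ _ (y `&` c y) _ hy).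
    by apply: leI2.
  have hcy := sh_c hc y hy.
  set p := m1; set q := m2.
  have pley : p <= y by [].
  have qlecy : q <= c y by [].
  pose r := c p `&` y; pose t := c q `&` c y.
  have hr : Sh c r := sh_rel H pley S1 hy.
  have ht : Sh c t := sh_rel H qlecy S2 hcy.
  have Ey : y = p `|` r by rewrite /r meetC; exact: (oml2 H pley S1 hy).
  have Ecy : c y = q `|` t by rewrite /t meetC; exact: (oml2 H qlecy S2 hcy).
  pose a (i : 'I_4) := nth \bot [:: p; q; r; t] i.
  have opq : p <= c q by apply: le_trans pley (fl _ _ qlecy).
  have opr : p <= c r by apply: (fl _ _); exact: leIl.
  have opt : p <= c t by apply: le_trans pley (fl _ _ (leIr _ _)).
  have oqr : q <= c r by apply: (fl _ _); apply: le_trans (leIr _ _) (fl _ _ qlecy).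
  have oqt : q <= c t by apply: (fl _ _); exact: leIl.
  have ort : r <= c t by apply: le_trans (leIr _ _) (fl _ _ (leIr _ _)).
  have hat : atoms c a.
    split.
    - by move=> [[|[|[|[|n]]]] hn].
    - move=> [[|[|[|[|n]]]] hn] [[|[|[|[|m]]]] hm'] //= _; by apply: (fl _ _).
    - apply: le_anti; rewrite lex1 /=.
      rewrite -(sh_join_c hc y hy) leUx; apply/andP; split.
        rewrite [X in X <= _]Ey leUx; apply/andP; split.
          by apply: (joins_min (j:=i0)); rewrite ?inE.
        by apply: (joins_min (j:=i2)); rewrite ?inE.
      rewrite [X in X <= _]Ecy leUx; apply/andP; split.
        by apply: (joins_min (j:=i1)); rewrite ?inE.
      by apply: (joins_min (j:=i3)); rewrite ?inE.
  pose S z := exists s, z = phi a s.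
  have subS : subalgebra c S.
    split.
    - by exists set0; rewrite phi0.
    - by exists setT; case: hat => _ _ <-.
    - by move=> u v [s ->] [s' ->]; exists (s :&: s'); rewrite (phi_I _ _ H hat).
    - by move=> u v [s ->] [s' ->]; exists (s :|: s'); rewrite phi_U.
    - by move=> u [s ->]; exists (~: s); rewrite (phi_C _ H hat).
  have Sx : S x.
    by exists ([set i0] :|: [set i1]); rewrite phi_U !phi1 hxj.
  have Sy : S y.
    by exists ([set i0] :|: [set i2]); rewrite phi_U !phi1 {1}Ey.
  have sub := @sg_sub _ _ c x y S subS Sx Sy.
  split; first split.
  - move=> u v w /sub [s ->] /sub [s' ->] /sub [s'' ->].
    by rewrite -!phi_U -!(phi_I _ _ H hat) -phi_U setIUr.
  - move=> u v w /sub [s ->] /sub [s' ->] /sub [s'' ->].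
    by rewrite -!(phi_I _ _ H hat) -!phi_U -(phi_I _ _ H hat) setUIr.
  - move=> u /sub [s ->].
    by rewrite (phi_C _ H hat) -(phi_I _ _ H hat) setICr phi0.
split; last exact: back.
split; last by move/back; case.
case=> dI dU.
have [[_ _ sI sU sC] [Dx Dy]] := @sg_sub_Sg _ _ c x y.
have Dcx := sC _ Dx; have Dcy := sC _ Dy.
have glb : forall u v, Sh c u -> Sh c v -> Sg c x y u -> Sg c x y v ->
    Sh c (u `&` v) /\ is_glb_in (Sh c) u v (u `&` v).
  move=> u v hu hv Du Dv.
  have sh : Sh c (u `&` v).
    rewrite /Sh (pk_meet hc) (dI _ _ _ (sI _ _ Du Dv) (sC _ Du) (sC _ Dv)).
    apply/eqP; rewrite join_eq0; apply/andP; split; apply/eqP.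
      by apply: (@le_bot _ _ _ (u `&` c u) _ hu); apply: leI2 => //; exact: leIl.
    by apply: (@le_bot _ _ _ (v `&` c v) _ hv); apply: leI2 => //; exact: leIr.
  split => //; rewrite /is_glb_in; split => //; [exact: leIl|exact: leIr|].
  by move=> z _ zu zv; rewrite lexI zu zv.
have [sh1 g1] := glb x y hx hy Dx Dy.
have [sh2 g2] := glb x (c y) hx (sh_c hc y hy) Dx Dcy.
exists (x `&` y), (x `&` c y); split => //.
have ex : (x `&` y) `|` (x `&` c y) = x.
  by rewrite -dI // (sh_join_c hc y hy) meetx1.
split => //; [exact: leIl|exact: leIl|].
by move=> z _ h1 h2; rewrite -ex leUx h1 h2.
Qed.
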